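(* Let $X$ be a finite-dimensional simplicial complex satisfying: (1) for all vertices $x,y$ of $X$, $\Sigma_x\subseteq\Sigma_y$ implies $x=y$; (2) if $K$ is a simplex of $X$ and $x$ is a vertex of $X$ with $x\notin K$, then there is a maximal simplex $L$ of $X$ with $K\subseteq L$ and $x\notin L$. Then $\mathrm{Aut}(X)$ is isomorphic to $\mathrm{Aut}(\mathcal{N}(X))$.
   Context: For a vertex $x$ of $X$, $\Sigma_x$ is the collection of maximal simplices of $X$ containing $x$. $\mathcal{N}(X)$ is the nerve of the collection of maximal simplices of $X$: its vertices are the maximal simplices of $X$, and a finite set of them is a simplex iff their common intersection is non-empty. $\mathrm{Aut}$ denotes the group of simplicial automorphisms. *)

(* Defs.v *)
From Stdlib Require Import List.
Set Implicit Arguments.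

Definition subset {V : Type} (A B : V -> Prop) : Prop := forall x, A x -> B x.

Definition finite_set {V : Type} (A : V -> Prop) : Prop :=
  exists l : list V, forall x, A x <-> In x l.

Definition is_simplicial_complex {V : Type} (S : (V -> Prop) -> Prop) : Prop :=
  (forall A, S A -> finite_set A /\ exists x, A x) /\
  (forall A B, S A -> subset B A -> (exists x, B x) -> S B) /\
  (forall x : V, S (fun y => y = x)).

Definition finite_dimensional {V : Type} (S : (V -> Prop) -> Prop) : Prop :=
  exists n : nat, forall A (l : list V),
    S A -> NoDup l -> (forall x, In x l -> A x) -> length l <= n.

Definition maximal_simplex {V : Type} (S : (V -> Prop) -> Prop) (A : V -> Prop) : Prop :=
  S A /\ forall B, S B -> subset A B -> subset B A.

Definition Sigma_sub {V : Type} (S : (V -> Prop) -> Prop) (x y : V) : Prop :=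
  forall A, maximal_simplex S A -> A x -> A y.

Definition MaxSimp {V : Type} (S : (V -> Prop) -> Prop) : Type :=
  { A : V -> Prop | maximal_simplex S A }.

Definition nerve {V : Type} (S : (V -> Prop) -> Prop) : (MaxSimp S -> Prop) -> Prop :=
  fun F => finite_set F /\ (exists A, F A) /\
           exists x : V, forall A : MaxSimp S, F A -> proj1_sig A x.

Definition image {V : Type} (f : V -> V) (A : V -> Prop) : V -> Prop :=
  fun y => exists x, A x /\ f x = y.

Definition is_aut {V : Type} (S : (V -> Prop) -> Prop) (f : V -> V) : Prop :=
  (forall x y, f x = f y -> x = y) /\ (forall y, exists x, f x = y) /\
  (forall A, S A <-> S (image f A)).

Definition aut_groups_isomorphic {V W : Type}
  (S : (V -> Prop) -> Prop) (T : (W -> Prop) -> Prop) : Prop :=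
  exists Phi : (V -> V) -> (W -> W),
    (forall f, is_aut S f -> is_aut T (Phi f)) /\
    (forall f g, is_aut S f -> is_aut S g ->
       Phi (fun x => f (g x)) = (fun y => Phi f (Phi g y))) /\
    (forall f g, is_aut S f -> is_aut S g -> Phi f = Phi g -> f = g) /\
    (forall h, is_aut T h -> exists f, is_aut S f /\ Phi f = h).

(* Main.v *)
Require Import Defs.
From Stdlib Require Import List Classical ClassicalEpsilon FunctionalExtensionality PropExtensionality ProofIrrelevance Lia.

Lemma pred_ext {T : Type} (A B : T -> Prop) : (forall x, A x <-> B x) -> A = B.
Proof. intro H. apply functional_extensionality; intro x. apply propositional_extensionality. apply H. Qed.

Definition deq {T : Type} (x y : T) : {x = y} + {x <> y} := excluded_middle_informative (x = y).

Lemma finite_image {T : Type} (f : T -> T) A : finite_set A -> finite_set (image f A).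
Proof.
  intros [l Hl]. exists (map f l). intro y. rewrite in_map_iff. unfold image.
  split; intros [x [H1 H2]]; exists x; split; try apply Hl; auto.
Qed.

Lemma finite_preimage {T : Type} (h : T -> T) (A : T -> Prop) :
  (forall x y, h x = h y -> x = y) -> (forall y, A y -> exists x, h x = y) ->
  finite_set A -> finite_set (fun x => A (h x)).
Proof.
  intros Hinj Hs [l Hl].
  assert (H : forall l0, (forall y, In y l0 -> exists x, h x = y) ->
     exists l', forall x, In x l' <-> In (h x) l0).
  { induction l0 as [|y l0 IH]; intros Hy.
    - exists nil. simpl. tauto.
    - destruct IH as [l' Hl']. intros z Hz; apply Hy; simpl; auto.
      destruct (Hy y (or_introl eq_refl)) as [x0 Hx0].
      exists (x0 :: l'). intro x. simpl. rewrite Hl'. split; intros [E|E]; auto.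
      + left; congruence.
      + left. apply Hinj. congruence. }
  destruct (H l) as [l' Hl'].
  { intros y Hy. apply Hs, Hl, Hy. }
  exists l'. intro x. rewrite Hl'. rewrite Hl. tauto.
Qed.

Lemma image_preimage {T : Type} (h : T -> T) (A : T -> Prop) :
  (forall y, exists x, h x = y) -> image h (fun x => A (h x)) = A.
Proof.
  intro Hs. apply pred_ext. intro y. unfold image. split.
  - intros [x [Hx E]]. subst; auto.
  - intro Hy. destruct (Hs y) as [x E]. exists x. subst; auto.
Qed.

Lemma preimage_image {T : Type} (h : T -> T) (A : T -> Prop) :
  (forall x y, h x = h y -> x = y) -> forall x, image h A (h x) <-> A x.
Proof.
  intros Hi x. unfold image. split.
  - intros [z [Hz E]]. apply Hi in E. subst; auto.
  - intro H. exists x; auto.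
Qed.

Lemma image_comp {T : Type} (f g : T -> T) (A : T -> Prop) :
  image (fun x => f (g x)) A = image f (image g A).
Proof.
  apply pred_ext. intro y. unfold image. split.
  - intros [x [Hx E]]. exists (g x). split; auto. exists x; auto.
  - intros [z [[x [Hx E1]] E2]]. exists x. subst; auto.
Qed.

Lemma aut_comp {T : Type} (Simp : (T -> Prop) -> Prop) f g :
  is_aut Simp f -> is_aut Simp g -> is_aut Simp (fun x => f (g x)).
Proof.
  intros [fi [fs fa]] [gi [gs ga]]. split; [|split].
  - intros x y E. apply gi, fi, E.
  - intro y. destruct (fs y) as [z Hz]. destruct (gs z) as [x Hx]. exists x. congruence.
  - intro A. rewrite image_comp. rewrite (ga A). apply fa.
Qed.

Lemma aut_max {T : Type} (Simp : (T -> Prop) -> Prop) f A :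
  is_aut Simp f -> maximal_simplex Simp A -> maximal_simplex Simp (image f A).
Proof.
  intros [fi [fs fa]] [SA MA]. split.
  - apply (proj1 (fa A)), SA.
  - intros B SB sub y By.
    assert (E := image_preimage f B fs).
    assert (SB' : Simp (fun x => B (f x))) by (apply fa; rewrite E; auto).
    assert (sub' : subset A (fun x => B (f x))).
    { intros x Ax. apply sub. exists x; auto. }
    destruct (fs y) as [x Hx]. subst y. exists x. split; auto.
    apply (MA _ SB' sub'). auto.
Qed.

Lemma aut_max_pre {T : Type} (Simp : (T -> Prop) -> Prop) f A :
  is_aut Simp f -> maximal_simplex Simp A -> maximal_simplex Simp (fun x => A (f x)).
Proof.
  intros [fi [fs fa]] [SA MA]. split.
  - apply (proj2 (fa _)). rewrite image_preimage; auto.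
  - intros B SB sub x Bx.
    assert (SB' : Simp (image f B)) by (apply (proj1 (fa B)); auto).
    assert (sub' : subset A (image f B)).
    { intros y Ay. destruct (fs y) as [z Hz]. subst y. exists z. split; auto. }
    apply (MA _ SB' sub'). exists x; auto.
Qed.

Definition good {T : Type} (Simp : (T -> Prop) -> Prop) (F : T -> Prop) :=
  forall F', subset F' F -> finite_set F' -> (exists x, F' x) -> Simp F'.
Definition maxgood {T : Type} (Simp : (T -> Prop) -> Prop) (F : T -> Prop) :=
  good Simp F /\ forall G, good Simp G -> subset F G -> subset G F.

Lemma good_image {T : Type} (Simp : (T -> Prop) -> Prop) h F :
  is_aut Simp h -> good Simp F -> good Simp (image h F).
Proof.
  intros [hi [hs ha]] G F' sub fin [y0 Hy0].
  rewrite <- (image_preimage h F' hs). apply (proj1 (ha _)). apply G.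
  - intros x Hx. apply (preimage_image h F hi). apply sub, Hx.
  - apply finite_preimage; auto.
  - destruct (hs y0) as [x0 Hx0]. exists x0. congruence.
Qed.

Lemma good_image_inv {T : Type} (Simp : (T -> Prop) -> Prop) h F :
  is_aut Simp h -> good Simp (image h F) -> good Simp F.
Proof.
  intros [hi [hs ha]] G F' sub fin [x0 Hx0].
  apply (proj2 (ha F')). apply G.
  - intros y [x [Hx E]]. exists x; split; auto.
  - apply finite_image; auto.
  - exists (h x0). exists x0; auto.
Qed.

Lemma maxgood_image {T : Type} (Simp : (T -> Prop) -> Prop) h F :
  is_aut Simp h -> maxgood Simp F -> maxgood Simp (image h F).
Proof.
  intros Ha [G M]. split.
  - apply good_image; auto.
  - intros K GK sub y Ky.
    destruct Ha as [hi [hs ha]].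
    assert (GK' : good Simp (fun x => K (h x))).
    { apply (good_image_inv Simp h). split; auto. rewrite image_preimage; auto. }
    assert (sub' : subset F (fun x => K (h x))).
    { intros x Fx. apply sub. exists x; auto. }
    destruct (hs y) as [x Hx]. subst y. exists x. split; auto.
    apply (M _ GK' sub'). auto.
Qed.

Lemma maxgood_image_inv {T : Type} (Simp : (T -> Prop) -> Prop) h F :
  is_aut Simp h -> maxgood Simp (image h F) -> maxgood Simp F.
Proof.
  intros Ha [G M]. split.
  - apply (good_image_inv Simp h); auto.
  - intros K GK sub x Kx.
    assert (GK' : good Simp (image h K)) by (apply good_image; auto).
    assert (sub' : subset (image h F) (image h K)).
    { intros y [z [Fz E]]. exists z; auto. }
    destruct Ha as [hi _].
    apply (preimage_image h F hi). apply (M _ GK' sub'). exists x; auto.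
Qed.

Lemma max_nat (P : nat -> Prop) n k0 : P k0 -> (forall k, P k -> k <= n) ->
  exists k, P k /\ forall j, P j -> j <= k.
Proof.
  revert k0. induction n; intros k0 Pk0 B.
  - exists k0. split; auto. intros j Pj. specialize (B j Pj). lia.
  - destruct (classic (P (Datatypes.S n))) as [Hp|Hn].
    + exists (Datatypes.S n). split; auto.
    + apply (IHn k0 Pk0). intros k Pk. specialize (B k Pk).
      assert (k <> Datatypes.S n) by (intro; subst; auto). lia.
Qed.

Lemma min_nat (P : nat -> Prop) k0 : P k0 -> exists k, P k /\ forall j, P j -> k <= j.
Proof.
  assert (H : forall n k, k <= n -> P k -> exists k, P k /\ forall j, P j -> k <= j).
  { induction n; intros k Hk Pk.
    - exists k. split; auto. intros; lia.
    - destruct (classic (exists j, j <= n /\ P j)) as [[j [Hj Pj]]|Hn].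
      + apply (IHn j Hj Pj).
      + exists k. split; auto. intros j Pj.
        assert (~ j <= n) by (intro; apply Hn; eauto).
        assert (~ k <= n) by (intro; apply Hn; eauto). lia. }
  intro; eapply H; eauto.
Qed.

Lemma exists_max (V : Type) (SC : (V -> Prop) -> Prop) (HX : is_simplicial_complex SC)
  (Hdim : finite_dimensional SC) A : SC A -> exists M, maximal_simplex SC M /\ subset A M.
Proof.
  intros SA. destruct Hdim as [n Hn].
  set (P := fun k => exists B, SC B /\ subset A B /\ exists l, NoDup l /\ length l = k /\ forall x, In x l -> B x).
  destruct (max_nat P n 0) as [k [[B [SB [AB [l [Nl [Ll Bl]]]]]] Mk]].
  - exists A. split; auto. split. intros x; auto. exists nil. repeat split; auto. constructor. intros x [].
  - intros k [B [SB [AB [l [Nl [Ll Bl]]]]]]. subst k. apply (Hn B l); auto.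
  - exists B. split; [split|]; auto.
    intros C HSC BC z Cz. apply NNPP. intro nBz.
    assert (HP : P (Datatypes.S k)).
    { exists C. split; auto. split. intros x Ax; apply BC, AB, Ax.
      exists (z :: l). split; [|split].
      - constructor; [|exact Nl]. intro Hz; apply nBz, Bl, Hz.
      - simpl; auto.
      - intros x [E|Hx]; [subst; auto|]. apply BC, Bl, Hx. }
    apply Mk in HP. lia.
Qed.

Lemma simp_char (V : Type) (SC : (V -> Prop) -> Prop) (HX : is_simplicial_complex SC)
  (Hdim : finite_dimensional SC) A :
  SC A <-> finite_set A /\ (exists x, A x) /\ exists M : MaxSimp SC, subset A (proj1_sig M).
Proof.
  split.
  - intro SA. destruct (proj1 HX A SA) as [fin ne]. split; auto. split; auto.
    destruct (exists_max V SC HX Hdim A SA) as [M [HM sub]].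
    exists (exist _ M HM). auto.
  - intros [fin [ne [M sub]]]. apply (proj1 (proj2 HX) (proj1_sig M)); auto.
    apply (proj1 (proj2_sig M)).
Qed.

Lemma fip (V : Type) (SC : (V -> Prop) -> Prop) (HX : is_simplicial_complex SC)
  (F : MaxSimp SC -> Prop) (M0 : MaxSimp SC) : good (@nerve V SC) F -> F M0 ->
  exists y, forall M, F M -> proj1_sig M y.
Proof.
  intros G F0.
  set (P := fun k => exists l : list (MaxSimp SC), (forall M, In M l -> F M) /\ l <> nil /\
     exists c : list V, length c = k /\ forall x, (forall M, In M l -> proj1_sig M x) -> In x c).
  assert (P0 : exists k, P k).
  { destruct HX as [HF _]. destruct (proj2_sig M0) as [SM0 _].
    destruct (HF _ SM0) as [[c Hc] _].
    exists (length c), (M0 :: nil). split. intros M [E|[]]; subst; auto.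
    split. discriminate. exists c. split; auto. intros x Hx. apply Hc. apply Hx. left; auto. }
  destruct P0 as [k0 Pk0].
  destruct (min_nat P k0 Pk0) as [k [[l [lF [ln [c [Lc Hc]]]]] Mk]].
  destruct (G (fun M => In M l)) as [_ [_ [x0 Hx0]]].
  - intros M HM; apply lF, HM.
  - exists l. intro; tauto.
  - destruct l as [|M1 l]. congruence. exists M1; left; auto.
  - exists x0. intros M FM. apply NNPP. intro nM.
    assert (HP : P (length (remove deq x0 c))).
    { exists (M :: l). split. intros M' [E|H]; subst; auto.
      split. discriminate. exists (remove deq x0 c). split; auto.
      intros x Hx. apply in_in_remove.
      - intro E; subst. apply nM, Hx. left; auto.
      - apply Hc. intros M' HM'. apply Hx. right; auto. }
    apply Mk in HP. assert (Hin : In x0 c) by (apply Hc; auto).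
    pose proof (remove_length_lt deq c x0 Hin). lia.
Qed.

Definition Sig {V : Type} (SC : (V -> Prop) -> Prop) (x : V) : MaxSimp SC -> Prop :=
  fun M => proj1_sig M x.

Lemma Sig_nonempty (V : Type) (SC : (V -> Prop) -> Prop) (HX : is_simplicial_complex SC)
  (Hdim : finite_dimensional SC) x : exists M, Sig SC x M.
Proof.
  destruct (exists_max V SC HX Hdim _ (proj2 (proj2 HX) x)) as [M [HM sub]].
  exists (exist _ M HM). unfold Sig; simpl. apply sub. reflexivity.
Qed.

Lemma good_Sig (V : Type) (SC : (V -> Prop) -> Prop) x : good (@nerve V SC) (Sig SC x).
Proof.
  intros F' sub fin ne. split; auto. split; auto. exists x. intros A HA. apply sub, HA.
Qed.

Lemma Sig_sub (V : Type) (SC : (V -> Prop) -> Prop) x y :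
  subset (Sig SC x) (Sig SC y) -> Sigma_sub SC x y.
Proof.
  intros H A HA Ax. apply (H (exist _ A HA)). exact Ax.
Qed.

Lemma maxgood_Sig (V : Type) (SC : (V -> Prop) -> Prop) (HX : is_simplicial_complex SC)
  (Hdim : finite_dimensional SC) (H1 : forall x y : V, Sigma_sub SC x y -> x = y) x :
  maxgood (@nerve V SC) (Sig SC x).
Proof.
  split. apply good_Sig.
  intros G GG sub.
  destruct (Sig_nonempty V SC HX Hdim x) as [M0 HM0].
  destruct (fip V SC HX G M0 GG (sub _ HM0)) as [y Hy].
  assert (E : x = y).
  { apply H1, Sig_sub. intros M HM. apply Hy, sub, HM. }
  subst y. exact Hy.
Qed.

Lemma maxgood_eq (V : Type) (SC : (V -> Prop) -> Prop) (HX : is_simplicial_complex SC)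
  (F : MaxSimp SC -> Prop) (M0 : MaxSimp SC) : maxgood (@nerve V SC) F -> F M0 -> exists y, F = Sig SC y.
Proof.
  intros [G M] F0. destruct (fip V SC HX F M0 G F0) as [y Hy].
  exists y. apply pred_ext. intro M1. split.
  - apply Hy.
  - apply (M _ (good_Sig V SC y) Hy).
Qed.

Lemma Sig_inj (V : Type) (SC : (V -> Prop) -> Prop)
  (H1 : forall x y : V, Sigma_sub SC x y -> x = y) x y : Sig SC x = Sig SC y -> x = y.
Proof.
  intro E. apply H1, Sig_sub. rewrite E. intros M; auto.
Qed.

Lemma MS_ext (V : Type) (SC : (V -> Prop) -> Prop) (M1 M2 : MaxSimp SC) :
  proj1_sig M1 = proj1_sig M2 -> M1 = M2.
Proof.
  destruct M1, M2; simpl; intro; subst; f_equal; apply proof_irrelevance.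
Qed.

Definition PhiM {V : Type} (SC : (V -> Prop) -> Prop) (f : V -> V) (M : MaxSimp SC) : MaxSimp SC :=
  match excluded_middle_informative (maximal_simplex SC (image f (proj1_sig M))) with
  | left p => exist _ _ p
  | right _ => M
  end.

Lemma PhiM_val (V : Type) (SC : (V -> Prop) -> Prop) f M :
  is_aut SC f -> proj1_sig (PhiM SC f M) = image f (proj1_sig M).
Proof.
  intro Hf. unfold PhiM. destruct (excluded_middle_informative _) as [p|n]; simpl; auto.
  exfalso. apply n, aut_max; auto. apply proj2_sig.
Qed.

Lemma Phi_inj (V : Type) (SC : (V -> Prop) -> Prop) f :
  is_aut SC f -> forall M1 M2, PhiM SC f M1 = PhiM SC f M2 -> M1 = M2.
Proof.
  intros Hf M1 M2 E. pose proof Hf as [fi _]. apply MS_ext.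
  apply (f_equal (@proj1_sig _ _)) in E.
  rewrite !PhiM_val in E by auto. apply pred_ext. intro x. split; intro H.
  - apply (preimage_image f _ fi x). rewrite <- E. apply (preimage_image f _ fi x). auto.
  - apply (preimage_image f _ fi x). rewrite E. apply (preimage_image f _ fi x). auto.
Qed.

Lemma Phi_aut (V : Type) (SC : (V -> Prop) -> Prop) f :
  is_aut SC f -> is_aut (@nerve V SC) (PhiM SC f).
Proof.
  intros Hf. pose proof Hf as [fi [fs fa]]. split; [|split].
  - apply Phi_inj; auto.
  - intro M'. assert (Hm := aut_max_pre SC f _ Hf (proj2_sig M')).
    exists (exist _ _ Hm). apply MS_ext. rewrite PhiM_val by auto. simpl.
    apply image_preimage; auto.
  - intro F. unfold nerve. split.
    + intros [[l Hl] [[M0 HM0] [x Hx]]]. split; [|split].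
      * apply finite_image. exists l; auto.
      * exists (PhiM SC f M0). exists M0; auto.
      * exists (f x). intros M' [M [FM E]]. subst M'. rewrite PhiM_val by auto.
        exists x. split; auto.
    + intros [fin [[M0' [M0 [HM0 _]]] [y Hy]]]. split; [|split].
      * assert (E : F = (fun M => image (PhiM SC f) F (PhiM SC f M))).
        { apply pred_ext; intro M. symmetry. apply preimage_image. apply Phi_inj; auto. }
        rewrite E. apply finite_preimage; auto.
        -- apply Phi_inj; auto.
        -- intros M' [M [_ E']]; exists M; auto.
      * exists M0; auto.
      * destruct (fs y) as [x Hx]. subst y. exists x. intros M FM.
        specialize (Hy (PhiM SC f M) (ex_intro _ M (conj FM eq_refl))).
        rewrite PhiM_val in Hy by auto. apply (proj1 (preimage_image f _ fi x)) in Hy. auto.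
Qed.

Theorem theorem3p2 (V : Type) (S : (V -> Prop) -> Prop)
  (HX : is_simplicial_complex S)
  (Hdim : finite_dimensional S)
  (H1 : forall x y : V, Sigma_sub S x y -> x = y)
  (H2 : forall (K : V -> Prop) (x : V), S K -> ~ K x ->
          exists L, maximal_simplex S L /\ subset K L /\ ~ L x) :
  aut_groups_isomorphic S (@nerve V S).
Proof.
  exists (PhiM S). split; [|split; [|split]].
  - apply Phi_aut.
  - intros f g Hf Hg. apply functional_extensionality. intro M. apply MS_ext.
    rewrite (PhiM_val V S _ M (aut_comp S f g Hf Hg)).
    rewrite (PhiM_val V S f _ Hf), (PhiM_val V S g M Hg).
    apply image_comp.
  - intros f g Hf Hg E. apply functional_extensionality. intro x.
    apply H1. intros A HA Afx.
    pose proof Hf as [fi [fs fa]].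
    assert (Hm := aut_max_pre S f _ Hf HA).
    set (M := exist (fun B => maximal_simplex S B) _ Hm : MaxSimp S).
    assert (E1 : proj1_sig (PhiM S f M) = proj1_sig (PhiM S g M)) by (rewrite E; reflexivity).
    rewrite (PhiM_val V S f M Hf), (PhiM_val V S g M Hg) in E1. simpl in E1.
    rewrite (image_preimage f A fs) in E1. rewrite E1. exists x. split; auto.
  - intros h Hh. pose proof Hh as [hi [hs ha]].
    assert (Ex : forall x, exists y, image h (Sig S x) = Sig S y).
    { intro x. destruct (Sig_nonempty V S HX Hdim x) as [M0 HM0].
      apply (maxgood_eq V S HX _ (h M0)).
      - apply maxgood_image; auto. apply maxgood_Sig; auto.
      - exists M0; auto. }
    set (f := fun x => proj1_sig (constructive_indefinite_description _ (Ex x))).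
    assert (Hf : forall x, image h (Sig S x) = Sig S (f x)).
    { intro x. unfold f. destruct (constructive_indefinite_description _ (Ex x)) as [y Hy]. simpl. auto. }
    assert (K1 : forall M x, proj1_sig M x <-> proj1_sig (h M) (f x)).
    { intros M x. change (Sig S x M <-> Sig S (f x) (h M)). rewrite <- Hf.
      symmetry. apply preimage_image; auto. }
    assert (fi : forall x y, f x = f y -> x = y).
    { intros x y E. apply (Sig_inj V S H1). apply pred_ext. intro M.
      unfold Sig. rewrite (K1 M x), (K1 M y), E. tauto. }
    assert (fs : forall y, exists x, f x = y).
    { intro y. set (G := fun M => Sig S y (h M)).
      assert (EG : image h G = Sig S y) by (exact (image_preimage h (Sig S y) hs)).
      assert (MG : maxgood (@nerve V S) G).
      { apply (maxgood_image_inv _ h); auto. rewrite EG. apply maxgood_Sig; auto. }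
      destruct (Sig_nonempty V S HX Hdim y) as [M0' HM0'].
      destruct (hs M0') as [M0 EM0].
      destruct (maxgood_eq V S HX G M0 MG) as [x Ex'].
      { unfold G. rewrite EM0. auto. }
      exists x. apply (Sig_inj V S H1). rewrite <- Hf, <- Ex'. auto. }
    assert (Haut : is_aut S f).
    { split; [|split]; auto. intro A. rewrite !(simp_char V S HX Hdim). split.
      - intros [fin [[x0 Hx0] [M sub]]]. split; [|split].
        + apply finite_image; auto.
        + exists (f x0), x0; auto.
        + exists (h M). intros y [x [Ax E]]. subst y. apply (proj1 (K1 M x)). apply sub, Ax.
      - intros [fin [[y0 [x0 [Hx0 _]]] [M' sub]]]. destruct (hs M') as [M EM]. subst M'.
        split; [|split].
        + assert (EA : A = (fun x => image f A (f x))).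
          { apply pred_ext. intro x. symmetry. apply preimage_image; auto. }
          rewrite EA. apply finite_preimage; auto.

        + exists x0; auto.
        + exists M. intros x Ax. apply (proj2 (K1 M x)). apply sub. exists x; auto. }
    exists f. split; auto.
    apply functional_extensionality. intro M. apply MS_ext.
    rewrite (PhiM_val V S f M Haut). apply pred_ext. intro y. split.
    + intros [x [Mx E]]. subst y. apply (proj1 (K1 M x)), Mx.
    + intro Hy. destruct (fs y) as [x E]. subst y. exists x. split; auto. apply (proj2 (K1 M x)), Hy.
Qed.
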